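(* Consider an instance of the constructive \$-protection problem (all voter weights equal to 1). Suppose the defender succeeds by awarding a set $\mathcal{V}_F\subseteq\mathcal{V}$ with $\sum_{v_j\in\mathcal{V}_F}p_j^a\le F$. If $v_{j'}\prec v_j$, $v_{j'}\in\mathcal{V}_F$ and $v_j\notin\mathcal{V}_F$, then the defender also succeeds by awarding $(\mathcal{V}_F\setminus\{v_{j'}\})\cup\{v_j\}$.
   Context: Election model. Candidates $\mathcal{C}=\{c_1,\dots,c_m\}$, voters $\mathcal{V}=\{v_1,\dots,v_n\}$; voter $v_j$ has a preference list $\tau_j$ (a linear order of $\mathcal{C}$), weight $w_j$, awarding price $p_j^a\in\mathbb{Z}_{>0}$, bribing price $p_j^b\in\mathbb{Z}_{>0}$. A scoring rule $\alpha=(\alpha_1\ge\cdots\ge\alpha_m)$ of nonnegative integers gives the candidate at position $z$ of $v_j$'s list $w_j\alpha_z$ points; total score is the sum over voters. In the constructive \$-protection problem all $w_j=1$, there is a designated candidate $c^\star$, a defense budget $F$ and an attack budget $B$. Given awarded voters $\mathcal{V}_F$, the attacker may choose $\mathcal{V}_B\subseteq\mathcal{V}\setminus\mathcal{V}_F$ with $\sum_{v_j\in\mathcal{V}_B}p_j^b\le B$ and replace each list in $\mathcal{V}_B$ by an arbitrary list; the defender succeeds with $\mathcal{V}_F$ (total awarding price at most $F$) if no such bribery makes $c^\star$ obtain a total score strictly higher than every other candidate. Dominance: $v_{j'}\prec v_j$ if either (i) $\tau_j=\tau_{j'}$, $w_j\ge w_{j'}$, $p_j^a\le p_{j'}^a$,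 $p_j^b\le p_{j'}^b$ with at least one of these three inequalities strict; or (ii) $\tau_j=\tau_{j'}$, $w_j=w_{j'}$, $p_j^a=p_{j'}^a$, $p_j^b=p_{j'}^b$ and $j'<j$. *)

(* Defs.v *)
From mathcomp Require Import all_boot all_order all_fingroup.
Set Implicit Arguments. Unset Strict Implicit. Unset Printing Implicit Defensive.

(* Candidates are 'I_m, voters are 'I_n.
   A preference list is a permutation tau : {perm 'I_m}; tau z is the
   candidate at position z (position 0 = top).  The position of candidate c
   in the list is (tau^-1 c). *)

Section Election.
Variables (m n : nat).

Definition scoring_rule (alpha : 'I_m -> nat) : Prop :=
  forall z1 z2 : 'I_m, z1 <= z2 -> alpha z2 <= alpha z1.

Definition score (alpha : 'I_m -> nat) (w : 'I_n -> nat)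
  (tau : 'I_n -> {perm 'I_m}) (c : 'I_m) : nat :=
  \sum_(j < n) w j * alpha ((tau j)^-1%g c).

Definition bribed (tau : 'I_n -> {perm 'I_m}) (VB : {set 'I_n})
  (sigma : 'I_n -> {perm 'I_m}) : 'I_n -> {perm 'I_m} :=
  fun j => if j \in VB then sigma j else tau j.

Definition unique_winner alpha w tau (cstar : 'I_m) : Prop :=
  forall c : 'I_m, c != cstar -> score alpha w tau c < score alpha w tau cstar.

Definition defender_succeeds alpha w tau (pa pb : 'I_n -> nat)
  (cstar : 'I_m) (F B : nat) (VF : {set 'I_n}) : Prop :=
  \sum_(j in VF) pa j <= F /\
  forall (VB : {set 'I_n}) (sigma : 'I_n -> {perm 'I_m}),
    VB \subset ~: VF -> \sum_(j in VB) pb j <= B ->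
    ~ unique_winner alpha w (bribed tau VB sigma) cstar.

(* dominance: dominated j' j  means  v_j' \prec v_j *)
Definition dominated (tau : 'I_n -> {perm 'I_m}) (w pa pb : 'I_n -> nat)
  (j' j : 'I_n) : Prop :=
  (tau j = tau j' /\ w j' <= w j /\ pa j <= pa j' /\ pb j <= pb j' /\
     ((w j' < w j) || (pa j < pa j') || (pb j < pb j')))
  \/
  (tau j = tau j' /\ w j = w j' /\ pa j = pa j' /\ pb j = pb j' /\ j' < j).

End Election.

(* Main.v *)
Require Import Defs.
From mathcomp Require Import all_boot all_order all_fingroup.

Theorem lemma8 (m n : nat) (alpha : 'I_m -> nat) (w : 'I_n -> nat)
  (tau : 'I_n -> {perm 'I_m}) (pa pb : 'I_n -> nat) (cstar : 'I_m)
  (F B : nat) (VF : {set 'I_n}) (j j' : 'I_n) :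
  scoring_rule alpha ->
  (forall i, w i = 1) ->
  (forall i, 0 < pa i) -> (forall i, 0 < pb i) ->
  defender_succeeds alpha w tau pa pb cstar F B VF ->
  dominated tau w pa pb j' j ->
  j' \in VF -> j \notin VF ->
  defender_succeeds alpha w tau pa pb cstar F B (j |: (VF :\ j')).
Proof.
move=> _ hw _ _ [hF hB] hdom hj' hj.
have [htau hpa hpb] : [/\ tau j = tau j', pa j <= pa j' & pb j <= pb j'].
  by case: hdom => [[-> [_ [? [? _]]]]|[-> [_ [-> [-> _]]]]].
have njj : j != j' by apply: contraNneq hj => ->.
split.
  have e1 : \sum_(i in VF) pa i = pa j' + \sum_(i in VF :\ j') pa i.
    by rewrite (big_setD1 j').
  rewrite big_setU1 /=; last by rewrite !inE negb_and hj orbT.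
  by rewrite e1 in hF; apply: leq_trans hF; rewrite leq_add2r.
move=> VB sigma hsub hcost.
have jVB : j \notin VB.
  by apply/negP=> /(subsetP hsub); rewrite !inE eqxx.
have VBsub : forall i, i \in VB -> i != j' -> i \notin VF.
  move=> i /(subsetP hsub); rewrite !inE negb_or negb_and => /andP[_ h] ne.
  by move: h; rewrite ne.
case: (boolP (j' \in VB)) => hj'B; last first.
  apply: hB => //; apply/subsetP => i iVB; rewrite inE.
  apply: VBsub => //; by apply: contraNneq hj'B => <-.
pose VB' := j |: (VB :\ j').
pose sigma' := fun i => if i == j then sigma j' else sigma i.
have hsub' : VB' \subset ~: VF.
  apply/subsetP => i; rewrite !inE => /orP[/eqP->//|/andP[ne iVB]].
  exact: VBsub.
have hcost' : \sum_(i in VB') pb i <= B.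
  rewrite big_setU1 /=; last by rewrite !inE negb_and jVB orbT.
  apply: leq_trans hcost; rewrite (big_setD1 j' hj'B) /= leq_add2r //.
have hP : forall i, bribed tau VB' sigma' i = bribed tau VB sigma (tperm j j' i).
  move=> i; rewrite /bribed /sigma' !inE.
  case: tpermP => [->|->|ne1 ne2].
  - by rewrite eqxx hj'B.
  - by rewrite eq_sym (negbTE njj) eqxx /= (negbTE jVB).
  - by move/eqP/negbTE: ne1 => ->; move/eqP/negbTE: ne2 => ->.
have hS : forall c, score alpha w (bribed tau VB' sigma') c = score alpha w (bribed tau VB sigma) c.
  move=> c; rewrite /score.
  rewrite [RHS](reindex_inj (@perm_inj _ (tperm j j'))) /=.
  by apply: eq_bigr => i _; rewrite hP !hw.
move: (hB VB' sigma' hsub' hcost'); apply: contra_not => hw'.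
by move=> c nc; rewrite !hS; apply: hw'.
Qed.
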